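(* Let $a_c>b_c>0$, $k_e>0$, $a_e^2=a_c^2+k_e$, $b_e^2=b_c^2+k_e$, let $c$ be the ellipse $x^2/a_c^2+y^2/b_c^2=1$, $e$ the ellipse $x^2/a_e^2+y^2/b_e^2=1$, and let $\alpha(x,y)=\bigl(\frac{a_e}{a_c}x,\frac{b_e}{b_c}y\bigr)$, so $\alpha(c)=e$. Let $\dots P_0P_1P_2\dots$ be a billiard in $e$ with caustic $c$ whose side $[P_i,P_{i+1}]$ touches $c$ at $Q_i$. Then there exists a unique billiard $\dots P_0'P_1'P_2'\dots$ in $e$ with caustic $c$ that is conjugate to it, namely $P_i'=\alpha(Q_i)$ for all $i$, and the relation is symmetric: if $Q_i'$ denotes the point where $[P_i',P_{i+1}']$ touches $c$, then $\alpha(Q_{i-1}')=P_i$ for all $i$. Moreover, for all $i$, $$l_i=\overline{P_iQ_i}=\overline{P_i'Q_{i-1}'}=r_i'\quad\text{and}\quad r_i=\overline{P_iQ_{i-1}}=\overline{P_{i-1}'Q_{i-1}'}=l_{i-1}',$$ where $\overline{XY}$ denotes the Euclidean distance.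
   Context: A billiard in $e$ with caustic $c$ is a sequence $(P_i)_{i\in\mathbb Z}$ of points of $e$ with $P_{i+1}\neq P_i$ such that every line $[P_i,P_{i+1}]$ is tangent to $c$ and $[P_{i-1},P_i]\neq[P_i,P_{i+1}]$. A billiard $\dots P_0'P_1'P_2'\dots$ in $e$ with caustic $c$ is called conjugate to $\dots P_0P_1P_2\dots$ if $\alpha$ maps the contact point $Q_i$ of the side $[P_i,P_{i+1}]$ with $c$ to $P_i'$ for every $i$. Notation: $l_i=\overline{P_iQ_i}$, $r_i=\overline{P_iQ_{i-1}}$, and $l_i',r_i'$ are the analogous quantities for the conjugate billiard. *)

(* Defs.v *)
From Stdlib Require Import Reals ZArith.
Open Scope R_scope.

Definition point := (R * R)%type.

Definition on_ellipse (a b : R) (P : point) : Prop :=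
  (fst P)^2 / a^2 + (snd P)^2 / b^2 = 1.

Definition line (A B : point) (X : point) : Prop :=
  exists t : R, X = (fst A + t * (fst B - fst A), snd A + t * (snd B - snd A)).

Definition same_line (A B C D : point) : Prop :=
  forall X, line A B X <-> line C D X.

(* The line [A,B] is tangent to the ellipse (a,b) at the contact point Q:
   Q lies on the ellipse and the line [A,B] is the tangent line at Q,
   i.e. A and B satisfy the tangent-line equation x Q1/a^2 + y Q2/b^2 = 1. *)
Definition tangent_at (a b : R) (A B Q : point) : Prop :=
  on_ellipse a b Q /\
  fst A * fst Q / a^2 + snd A * snd Q / b^2 = 1 /\
  fst B * fst Q / a^2 + snd B * snd Q / b^2 = 1.

Definition billiard (ae be ac bc : R) (P : Z -> point) : Prop :=
  (forall i, on_ellipse ae be (P i)) /\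
  (forall i, P (i + 1)%Z <> P i) /\
  (forall i, exists Q, tangent_at ac bc (P i) (P (i + 1)%Z) Q) /\
  (forall i, ~ same_line (P (i - 1)%Z) (P i) (P i) (P (i + 1)%Z)).

Definition contact_points (ac bc : R) (P Q : Z -> point) : Prop :=
  forall i, tangent_at ac bc (P i) (P (i + 1)%Z) (Q i).

Definition alpha (ae be ac bc : R) (X : point) : point :=
  (ae / ac * fst X, be / bc * snd X).

Definition dist2 (X Y : point) : R :=
  sqrt ((fst X - fst Y)^2 + (snd X - snd Y)^2).

Definition conjugate (ae be ac bc : R) (Q P' : Z -> point) : Prop :=
  billiard ae be ac bc P' /\ forall i, P' i = alpha ae be ac bc (Q i).

(* Main.v *)
Require Import Defs.
From Stdlib Require Import Reals ZArith Lra Lia Psatz FunctionalExtensionality.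
Open Scope R_scope.

Lemma coef_uniq (a1 a2 b1 b2 c1 c2 d1 d2 : R):
  (a1,a2) <> (b1,b2) -> a1*c1+a2*c2=1 -> b1*c1+b2*c2=1 ->
  a1*d1+a2*d2=1 -> b1*d1+b2*d2=1 -> c1=d1 /\ c2=d2.
Proof.
  intros Hne H1 H2 H3 H4.
  destruct (Req_dec (a1*b2 - a2*b1) 0) as [Hd|Hd].
  - exfalso; apply Hne.
    assert (E: a1*(b1*c1+b2*c2) - b1*(a1*c1+a2*c2) = c2*(a1*b2-a2*b1)) by ring.
    rewrite H1, H2, Hd in E.
    assert (E': b2*(a1*c1+a2*c2) - a2*(b1*c1+b2*c2) = c1*(a1*b2-a2*b1)) by ring.
    rewrite H1, H2, Hd in E'.
    f_equal; lra.
  - assert (X1: c1*(a1*b2-a2*b1) = b2 - a2).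
    { assert (E: c1*(a1*b2-a2*b1) = b2*(a1*c1+a2*c2) - a2*(b1*c1+b2*c2)) by ring.
      rewrite E, H1, H2; ring. }
    assert (Y1: d1*(a1*b2-a2*b1) = b2 - a2).
    { assert (E: d1*(a1*b2-a2*b1) = b2*(a1*d1+a2*d2) - a2*(b1*d1+b2*d2)) by ring.
      rewrite E, H3, H4; ring. }
    assert (X2: c2*(a1*b2-a2*b1) = a1 - b1).
    { assert (E: c2*(a1*b2-a2*b1) = a1*(b1*c1+b2*c2) - b1*(a1*c1+a2*c2)) by ring.
      rewrite E, H1, H2; ring. }
    assert (Y2: d2*(a1*b2-a2*b1) = a1 - b1).
    { assert (E: d2*(a1*b2-a2*b1) = a1*(b1*d1+b2*d2) - b1*(a1*d1+a2*d2)) by ring.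
      rewrite E, H3, H4; ring. }
    split; apply Rmult_eq_reg_r with (a1*b2-a2*b1); auto; lra.
Qed.

Lemma line_fwd (A B X : point) c1 c2 :
  fst A*c1+snd A*c2=1 -> fst B*c1+snd B*c2=1 -> line A B X -> fst X*c1+snd X*c2=1.
Proof.
  intros HA HB [t ->]; simpl.
  assert (E: (fst A + t * (fst B - fst A)) * c1 + (snd A + t * (snd B - snd A)) * c2
    = (fst A*c1+snd A*c2) + t*((fst B*c1+snd B*c2) - (fst A*c1+snd A*c2))) by ring.
  rewrite E, HA, HB; ring.
Qed.

Lemma line_bwd (A B X : point) c1 c2 :
  A <> B -> fst A*c1+snd A*c2=1 -> fst B*c1+snd B*c2=1 -> fst X*c1+snd X*c2=1 -> line A B X.
Proof.
  destruct A as [a1 a2], B as [b1 b2], X as [x1 x2]; simpl.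
  intros Hne HA HB HX.
  assert (ED: c1*(b1-a1)+c2*(b2-a2) = 0) by lra.
  assert (EE: c1*(x1-a1)+c2*(x2-a2) = 0) by lra.
  assert (Z2: c2*((x1-a1)*(b2-a2)-(x2-a2)*(b1-a1)) = 0).
  { assert (E: c2*((x1-a1)*(b2-a2)-(x2-a2)*(b1-a1)) =
       (x1-a1)*(c1*(b1-a1)+c2*(b2-a2)) - (b1-a1)*(c1*(x1-a1)+c2*(x2-a2))) by ring.
    rewrite E, ED, EE; ring. }
  assert (Z1: c1*((x1-a1)*(b2-a2)-(x2-a2)*(b1-a1)) = 0).
  { assert (E: c1*((x1-a1)*(b2-a2)-(x2-a2)*(b1-a1)) =
       (b2-a2)*(c1*(x1-a1)+c2*(x2-a2)) - (x2-a2)*(c1*(b1-a1)+c2*(b2-a2))) by ring.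
    rewrite E, ED, EE; ring. }
  assert (Hdet: (x1-a1)*(b2-a2)-(x2-a2)*(b1-a1) = 0).
  { destruct (Req_dec c1 0) as [h|h].
    - destruct (Req_dec c2 0) as [h'|h'].
      + subst; lra.
      + destruct (Rmult_integral _ _ Z2); [contradiction|assumption].
    - destruct (Rmult_integral _ _ Z1); [contradiction|assumption]. }
  destruct (Req_dec (b1-a1) 0) as [h|h].
  - assert (h2: b2 - a2 <> 0).
    { intro h2; apply Hne; f_equal; lra. }
    exists ((x2-a2)/(b2-a2)); simpl.
    assert (x1 - a1 = 0).
    { apply Rmult_eq_reg_r with (b2-a2); auto. rewrite h in Hdet. lra. }
    f_equal; [| field; auto].
    rewrite h; lra.
  - exists ((x1-a1)/(b1-a1)); simpl.
    f_equal; [field; auto|].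
    apply Rplus_eq_reg_l with (-a2).
    apply Rmult_eq_reg_r with (b1-a1); auto.
    field_simplify; auto. lra.
Qed.

Lemma same_line_of (A B C D : point) c1 c2 :
  A <> B -> C <> D ->
  fst A*c1+snd A*c2=1 -> fst B*c1+snd B*c2=1 ->
  fst C*c1+snd C*c2=1 -> fst D*c1+snd D*c2=1 -> same_line A B C D.
Proof.
  intros h1 h2 HA HB HC HD X; split; intro H.
  - apply line_bwd with c1 c2; auto. eapply line_fwd; [exact HA|exact HB|exact H].
  - apply line_bwd with c1 c2; auto. eapply line_fwd; [exact HC|exact HD|exact H].
Qed.

Lemma tconv (a b : R) (A Q : point) :
  fst A * fst Q / a^2 + snd A * snd Q / b^2 = fst A * (fst Q / a^2) + snd A * (snd Q / b^2).
Proof. unfold Rdiv; ring. Qed.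

Lemma tangent_uniq a b A B Q1 Q2 : a <> 0 -> b <> 0 -> A <> B ->
  tangent_at a b A B Q1 -> tangent_at a b A B Q2 -> Q1 = Q2.
Proof.
  intros ha hb hne [_ [h1 h2]] [_ [h3 h4]].
  rewrite tconv in h1, h2, h3, h4.
  destruct A as [a1 a2], B as [b1 b2], Q1 as [u1 u2], Q2 as [v1 v2]; cbn [fst snd] in *.
  destruct (coef_uniq _ _ _ _ _ _ _ _ hne h1 h2 h3 h4) as [e1 e2].
  f_equal.
  - replace u1 with (u1/a^2*a^2) by (field; auto). rewrite e1; field; auto.
  - replace u2 with (u2/b^2*b^2) by (field; auto). rewrite e2; field; auto.
Qed.

Theorem lemma3p11 (ac bc ke ae be : R) (P Q : Z -> point) :
  ac > bc -> bc > 0 -> ke > 0 -> ae > 0 -> be > 0 ->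
  ae ^ 2 = ac ^ 2 + ke -> be ^ 2 = bc ^ 2 + ke ->
  billiard ae be ac bc P -> contact_points ac bc P Q ->
  (exists! P' : Z -> point, conjugate ae be ac bc Q P') /\
  (forall (P' Q' : Z -> point),
     conjugate ae be ac bc Q P' -> contact_points ac bc P' Q' ->
     forall i : Z,
       alpha ae be ac bc (Q' (i - 1)%Z) = P i /\
       dist2 (P i) (Q i) = dist2 (P' i) (Q' (i - 1)%Z) /\
       dist2 (P i) (Q (i - 1)%Z) = dist2 (P' (i - 1)%Z) (Q' (i - 1)%Z)).
Proof.
  intros Hab Hb Hk Hae Hbe Hea Heb HP HQ.
  assert (Ha0 : ac <> 0) by lra.
  assert (Hb0 : bc <> 0) by lra.
  assert (Hae0 : ae <> 0) by lra.
  assert (Hbe0 : be <> 0) by lra.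
  destruct HP as [Pe [Pne [_ Pnl]]].
  set (al := alpha ae be ac bc).
  set (bt := fun X : point => (ac/ae*fst X, bc/be*snd X)).
  assert (Qc: forall i, on_ellipse ac bc (Q i)) by (intro i; apply (HQ i)).
  assert (F1: forall X, on_ellipse ac bc X -> on_ellipse ae be (al X)).
  { intros [x y] H; unfold on_ellipse in *; unfold al, alpha; cbn [fst snd] in *.
    rewrite <- H. field; auto. }
  assert (F2: forall X, on_ellipse ae be X -> on_ellipse ac bc (bt X)).
  { intros [x y] H; unfold on_ellipse in *; unfold bt; cbn [fst snd] in *.
    rewrite <- H. field; auto. }
  assert (F3: forall X, al (bt X) = X).
  { intros [x y]; unfold al, alpha, bt; cbn [fst snd]; f_equal; field; auto. }
  assert (F4: forall X, bt (al X) = X).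
  { intros [x y]; unfold al, alpha, bt; cbn [fst snd]; f_equal; field; auto. }
  assert (F5: forall X Y, on_ellipse ae be X -> on_ellipse ac bc Y ->
             dist2 X Y = dist2 (al Y) (bt X)).
  { intros [x y] [u v] HX HY; unfold on_ellipse, dist2, al, alpha, bt in *;
      cbn [fst snd] in *.
    f_equal.
    assert (E: (ae / ac * u - ac / ae * x) ^ 2 + (be / bc * v - bc / be * y) ^ 2
       - ((x - u) ^ 2 + (y - v) ^ 2)
       = (ae^2 - ac^2) * (u^2/ac^2 - x^2/ae^2) + (be^2 - bc^2) * (v^2/bc^2 - y^2/be^2)).
    { field; auto. }
    replace (ae^2 - ac^2) with ke in E by lra.
    replace (be^2 - bc^2) with ke in E by lra.
    assert (E2: ke * (u ^ 2 / ac ^ 2 - x ^ 2 / ae ^ 2) + ke * (v ^ 2 / bc ^ 2 - y ^ 2 / be ^ 2)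
       = ke * ((u ^ 2 / ac ^ 2 + v^2/bc^2) - (x ^ 2 / ae ^ 2 + y ^ 2 / be ^ 2))) by ring.
    rewrite E2, HX, HY in E. lra. }
  set (P0 := fun i => al (Q i)).
  assert (K: forall i, tangent_at ac bc (P0 i) (P0 (i+1)%Z) (bt (P (i+1)%Z))).
  { intro i. destruct (HQ i) as [_ [_ h1]]. destruct (HQ (i+1)%Z) as [_ [h2 _]].
    split; [apply F2, Pe|split].
    - rewrite <- h1; unfold P0, al, alpha, bt; cbn [fst snd]; field; auto.
    - rewrite <- h2; unfold P0, al, alpha, bt; cbn [fst snd]; field; auto. }
  assert (Qne: forall i, Q (i+1)%Z <> Q i).
  { intros i E. apply (Pnl (i+1)%Z).
    replace (i+1-1)%Z with i by lia.
    destruct (HQ i) as [_ [h1 h2]]. destruct (HQ (i+1)%Z) as [_ [_ h3]].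
    rewrite E in h3. rewrite tconv in h1, h2, h3.
    apply same_line_of with (fst (Q i) / ac^2) (snd (Q i) / bc^2); auto.
    all: intro h; apply (Pne i); auto. }
  assert (P0ne: forall i, P0 (i+1)%Z <> P0 i).
  { intros i E. apply (Qne i). unfold P0 in E.
    rewrite <- (F4 (Q i)), <- E, F4; reflexivity. }
  assert (HC: conjugate ae be ac bc Q P0).
  { split; [|intro; reflexivity].
    split; [intro i; apply F1, Qc|].
    split; [exact P0ne|].
    split; [intro i; eexists; apply K|].
    intros i Hs.
    assert (K1 := K (i-1)%Z). replace (i-1+1)%Z with i in K1 by lia.
    assert (K2 := K i).
    destruct K1 as [_ [k1 k2]]. destruct K2 as [_ [k3 k4]].
    rewrite tconv in k1, k2, k3, k4.
    assert (k5: fst (P0 (i+1)%Z) * (fst (bt (P i)) / ac ^ 2) +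
                snd (P0 (i+1)%Z) * (snd (bt (P i)) / bc ^ 2) = 1).
    { eapply line_fwd; [exact k1|exact k2|].
      apply Hs. exists 1. destruct (P0 i), (P0 (i+1)%Z); cbn [fst snd]; f_equal; ring. }
    assert (E: bt (P i) = bt (P (i+1)%Z)).
    { apply tangent_uniq with ac bc (P0 i) (P0 (i+1)%Z).
      - exact Ha0.
      - exact Hb0.
      - intro h; apply (P0ne i); rewrite h; reflexivity.
      - split; [apply F2, Pe|]. rewrite !tconv; split; assumption.
      - apply K. }
    apply (Pne i). rewrite <- (F3 (P i)), E, F3; reflexivity. }
  split.
  - exists P0. split; [exact HC|].
    intros P' [_ H]. apply functional_extensionality; intro i; rewrite H; reflexivity.
  - intros P' Q' [HB HP'] HQ' i.
    assert (EP: P' = P0) by (apply functional_extensionality; intro j; rewrite HP'; reflexivity).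
    subst P'.
    assert (EQ: Q' (i-1)%Z = bt (P i)).
    { apply tangent_uniq with ac bc (P0 (i-1)%Z) (P0 i); auto.
      - intro h. apply (P0ne (i-1)%Z). replace (i-1+1)%Z with i by lia. auto.
      - assert (h := HQ' (i-1)%Z). replace (i-1+1)%Z with i in h by lia. exact h.
      - assert (h := K (i-1)%Z). replace (i-1+1)%Z with i in h by lia. exact h. }
    rewrite EQ. split; [apply F3|].
    split; unfold P0; apply F5; auto.
Qed.
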